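(* Let $k$ be the quadratic eigenvalue multiplicity of the QCQP data. If $\mathcal F$ is a semidefinite face of $\Gamma$, then $\dim(\mathcal V(\mathcal F))\ge k$.
   Context: Let $N\ge1$, $m_I,m_E\ge0$, $m=m_I+m_E\ge1$, and $A_0,\dots,A_m\in\mathbb S^N$. The quadratic eigenvalue multiplicity is the largest positive integer $k$ (necessarily dividing $N$; write $N=nk$) such that for every $i\in\{0,\dots,m\}$ there exists $\mathcal A_i\in\mathbb S^n$ with $A_i=I_k\otimes\mathcal A_i$ (Kronecker product). For $\gamma\in\mathbb R^m$, $A(\gamma)=A_0+\sum_{i=1}^m\gamma_iA_i$; $\Gamma:=\{\gamma\in\mathbb R^m: A(\gamma)\succeq 0,\ \gamma_i\ge 0\ \forall i\in\{1,\dots,m_I\}\}$. A nonempty face $\mathcal F$ of $\Gamma$ is semidefinite if no $\gamma\in\mathcal F$ has $A(\gamma)\succ0$; $\mathcal V(\mathcal F):=\{v\in\mathbb R^N: A(\gamma)v=0\ \forall\gamma\in\mathcal F\}$. *)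

(* Defs.v *)
From HB Require Import structures.
From mathcomp Require Import all_boot all_order all_algebra.
Set Implicit Arguments. Unset Strict Implicit. Unset Printing Implicit Defensive.
Import Order.TTheory GRing.Theory Num.Theory.
Local Open Scope ring_scope.

Section Defs.
Variable R : realFieldType.

Definition mx_nat (n : nat) (B : 'M[R]_n) (r s : nat) : R :=
  match @insub _ (fun x => x < n)%N _ r, @insub _ (fun x => x < n)%N _ s with
  | Some r', Some s' => B r' s'
  | _, _ => 0
  end.

(* Kronecker product I_k (x) B : block diagonal with k copies of B;
   entry ((a*n+r),(b*n+s)) = delta_ab * B r s *)
Definition kron_Ik (k n : nat) (B : 'M[R]_n) : 'M[R]_(k * n) :=
  \matrix_(i, j) if (i %/ n == j %/ n)%N then mx_nat B (i %% n) (j %% n) else 0.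

Definition sym_mx (n : nat) (B : 'M[R]_n) : Prop := B^T = B.

Definition psd (N : nat) (C : 'M[R]_N) : Prop :=
  forall x : 'cV[R]_N, 0 <= (x^T *m C *m x) ord0 ord0.
Definition pd (N : nat) (C : 'M[R]_N) : Prop :=
  forall x : 'cV[R]_N, x != 0 -> 0 < (x^T *m C *m x) ord0 ord0.

(* k is an admissible multiplicity: N = k n and A_i = I_k (x) cA_i, cA_i in S^n *)
Definition has_qmult (N m : nat) (A : 'I_m.+1 -> 'M[R]_N) (k : nat) : Prop :=
  (0 < k)%N /\
  exists n (e : (k * n = N)%N), forall i : 'I_m.+1,
    exists cA : 'M[R]_n, sym_mx cA /\ A i = castmx (e, e) (kron_Ik k cA).

Definition is_qem (N m : nat) (A : 'I_m.+1 -> 'M[R]_N) (k : nat) : Prop :=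
  has_qmult A k /\ forall k', has_qmult A k' -> (k' <= k)%N.

(* A(gamma) = A_0 + sum_i gamma_i A_i, gamma indexed by 'I_m (gamma_(i+1) = gamma 0 i) *)
Definition Aof (N m : nat) (A : 'I_m.+1 -> 'M[R]_N) (g : 'rV[R]_m) : 'M[R]_N :=
  A ord0 + \sum_(i < m) g ord0 i *: A (lift ord0 i).

Definition Gamma (N m mI : nat) (A : 'I_m.+1 -> 'M[R]_N) (g : 'rV[R]_m) : Prop :=
  psd (Aof A g) /\ forall i : 'I_m, (i < mI)%N -> 0 <= g ord0 i.

Definition convex_set (m : nat) (S : 'rV[R]_m -> Prop) : Prop :=
  forall x y t, S x -> S y -> 0 <= t -> t <= 1 -> S (t *: x + (1 - t) *: y).

Definition is_face (m : nat) (S F : 'rV[R]_m -> Prop) : Prop :=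
  (exists x, F x) /\ (forall x, F x -> S x) /\ convex_set F /\
  forall x y t, S x -> S y -> 0 < t -> t < 1 ->
    F (t *: x + (1 - t) *: y) -> F x /\ F y.

Definition semidef_face (N m mI : nat) (A : 'I_m.+1 -> 'M[R]_N)
  (F : 'rV[R]_m -> Prop) : Prop :=
  is_face (Gamma mI A) F /\ forall g, F g -> ~ pd (Aof A g).

Definition VF (N m : nat) (A : 'I_m.+1 -> 'M[R]_N) (F : 'rV[R]_m -> Prop)
  (v : 'cV[R]_N) : Prop :=
  forall g, F g -> Aof A g *m v = 0.

(* dim(V) >= d for a subspace V of R^N given as a predicate:
   V contains d linearly independent vectors (the columns of a
   column-full-rank N x d matrix). *)
Definition dim_ge (N : nat) (V : 'cV[R]_N -> Prop) (d : nat) : Prop :=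
  exists B : 'M[R]_(N, d), \rank B = d /\ forall j : 'I_d, V (col j B).

End Defs.

(* Main.v *)
Require Import Defs.
From HB Require Import structures.
From mathcomp Require Import all_boot all_order all_algebra.
From mathcomp Require Import zify ring lra.
From Stdlib Require Import Classical.
Import Order.TTheory GRing.Theory Num.Theory.
Set Implicit Arguments. Unset Strict Implicit. Unset Printing Implicit Defensive.


Section Tau.
Variables (k n : nat) (Hkn : (0 < k * n)%N).

Definition tau (s : nat) (i : 'I_(k * n)) : 'I_(k * n) :=
  Ordinal (ltn_pmod (i + s * n) Hkn).

Lemma npos : (0 < n)%N. Proof. by move: Hkn; rewrite muln_gt0 => /andP[]. Qed.
Lemma kpos : (0 < k)%N. Proof. by move: Hkn; rewrite muln_gt0 => /andP[]. Qed.

Lemma tau_mod s i : (tau s i %% n = i %% n)%N.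
Proof.
rewrite /= modn_dvdm ?dvdn_mull // addnC modnMDl //.
Qed.

Lemma tau_div s i : (tau s i %/ n = (i %/ n + s) %% k)%N.
Proof.
rewrite /= -modn_divl addnC divnMDl ?npos // addnC //.
Qed.

Lemma ord_div_lt (i : 'I_(k * n)) : (i %/ n < k)%N.
Proof. by rewrite ltn_divLR ?npos. Qed.

Lemma tau_blk s i j : (tau s i %/ n == tau s j %/ n) = (i %/ n == j %/ n).
Proof.
rewrite !tau_div eqn_modDr !modn_small //; exact: ord_div_lt.
Qed.

Lemma tau_inj s : injective (tau s).
Proof.
move=> i j /(congr1 val) /= h.
have h1 : (i %% n = j %% n)%N by rewrite -(tau_mod s i) -(tau_mod s j) /= h.
have h2 : (i %/ n = j %/ n)%N.
  have e1 := tau_div s i; have e2 := tau_div s j; move: e1 e2.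
  rewrite /= h => -> /eqP; rewrite eq_sym eqn_modDr !modn_small ?ord_div_lt //.
  by move/eqP.
by apply/val_inj; rewrite /= (divn_eq i n) (divn_eq j n) h1 h2.
Qed.

Lemma tau_comp s t i : tau s (tau t i) = tau (s + t) i.
Proof.
apply/val_inj => /=; rewrite modnDml mulnDl; congr (_ %% _)%N; lia.
Qed.

Lemma tau_back s i : (s <= k)%N -> tau s (tau (k - s) i) = i.
Proof.
move=> hs; rewrite tau_comp subnKC //; apply/val_inj => /=.
by rewrite modnDr modn_small.
Qed.

Lemma arith_ne (b s s' : nat) : (b < k)%N -> (s < k)%N -> (s' < k)%N -> s != s' ->
  ((b + (s + (k - s'))) %% k != b)%N.
Proof.
move=> hb hs hs' hne; apply/eqP => h.
have := divn_eq (b + (s + (k - s'))) k; rewrite h.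
set q := ((b + (s + (k - s'))) %/ k)%N.
move/eqP: hne => hne.
case: q => [|[|q]] /=; first lia; first lia. nia.
Qed.
End Tau.

Local Open Scope ring_scope.
Local Open Scope ring_scope.

Section Psd.
Variable R : realFieldType.

Lemma quad_expand (N : nat) (P : 'M[R]_N) (c w : 'cV_N) (t : R) : P^T = P ->
  ((c + t *: w)^T *m P *m (c + t *: w)) ord0 ord0 =
  (c^T *m P *m c) ord0 ord0 + 2 * t * (w^T *m P *m c) ord0 ord0
   + t ^+ 2 * (w^T *m P *m w) ord0 ord0.
Proof.
move=> hP.
have hs : (c^T *m P *m w) ord0 ord0 = (w^T *m P *m c) ord0 ord0.
  transitivity (((c^T *m P *m w)^T) ord0 ord0); first by rewrite [RHS]mxE.
  by rewrite !trmx_mul trmxK hP mulmxA.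
have -> : (c + t *: w)^T = c^T + t *: w^T by rewrite linearD linearZ.
rewrite !mulmxDl !mulmxDr -!scalemxAl -!scalemxAr.
move: hs; set X1 := c^T *m P *m c; set X2 := c^T *m P *m w;
set X3 := w^T *m P *m c; set X4 := w^T *m P *m w => hs.
clearbody X1 X2 X3 X4. rewrite !mxE hs; ring.
Qed.

Lemma psd_ker (N : nat) (P : 'M[R]_N) (c : 'cV_N) : P^T = P -> psd P ->
  (c^T *m P *m c) ord0 ord0 = 0 -> P *m c = 0.
Proof.
move=> hP hpsd h0; apply/matrixP => i j; rewrite ord1 [RHS]mxE.
pose w : 'cV[R]_N := delta_mx i ord0.
have ha : (w^T *m P *m c) ord0 ord0 = (P *m c) i ord0.
  by rewrite -mulmxA trmx_delta -rowE mxE.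
rewrite -ha; set a := (w^T *m P *m c) ord0 ord0.
have hq := hpsd w; set q := (w^T *m P *m w) ord0 ord0 in hq.
set t := - a / (q + 1).
have hq1 : 0 < q + 1 by lra.
have ht : t * (q + 1) = - a by rewrite /t mulfVK // lt0r_neq0.
have := hpsd (c + t *: w); rewrite quad_expand // h0 -/a -/q add0r => H.
have H2 : 0 <= (2 * t * a + t ^+ 2 * q) * (q + 1) ^+ 2.
  by apply: mulr_ge0 => //; rewrite sqr_ge0.
have H3 : (2 * t * a + t ^+ 2 * q) * (q + 1) ^+ 2 = - (a ^+ 2 * (q + 2)).
  have -> : (2 * t * a + t ^+ 2 * q) * (q + 1) ^+ 2 =
     2 * (t * (q + 1)) * a * (q + 1) + (t * (q + 1)) ^+ 2 * q by ring.
  rewrite ht; ring.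
rewrite H3 oppr_ge0 in H2.
have : a ^+ 2 * (q + 2) == 0.
  by rewrite eq_le H2 mulr_ge0 // ?sqr_ge0 //; lra.
rewrite mulf_eq0 sqrf_eq0 => /orP[/eqP //|]; lra.
Qed.

Lemma psd_sum_ker (N : nat) (P Q : 'M[R]_N) (c : 'cV_N) : P^T = P -> Q^T = Q ->
  psd P -> psd Q -> (P + Q) *m c = 0 -> P *m c = 0.
Proof.
move=> hP hQ pP pQ h; apply: psd_ker => //.
have hPQ : (c^T *m (P + Q) *m c) ord0 ord0 = 0 by rewrite -mulmxA h mulmx0 mxE.
move: hPQ; rewrite mulmxDr mulmxDl.
have := pP c; have := pQ c.
set x := c^T *m P *m c; set y := c^T *m Q *m c; clearbody x y.
rewrite mxE; lra.
Qed.
End Psd.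

Section Blk.
Variable R : realFieldType.
Variables (k n : nat) (Hkn : (0 < k * n)%N).

Definition blk (M : 'M[R]_(k * n)) :=
  (forall i j : 'I_(k * n), (i %/ n != j %/ n)%N -> M i j = 0) /\
  (forall s i j, M (tau Hkn s i) (tau Hkn s j) = M i j).

Lemma blk_kron (cA : 'M[R]_n) : blk (kron_Ik k cA).
Proof.
split.
- by move=> i j h; rewrite mxE (negbTE h).
- by move=> s i j; rewrite !mxE tau_blk !tau_mod.
Qed.

Lemma blk_Aof m (A : 'I_m.+1 -> 'M[R]_(k * n)) g :
  (forall i, blk (A i)) -> blk (Aof A g).
Proof.
move=> hA; split.
- move=> i j h; rewrite /Aof !mxE summxE ((hA ord0).1 _ _ h) add0r.
  by apply: big1 => l _; rewrite mxE ((hA _).1 _ _ h) mulr0.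
- move=> s i j; rewrite /Aof !mxE !summxE (hA ord0).2; congr (_ + _).
  by apply: eq_bigr => l _; rewrite !mxE (hA _).2.
Qed.

Lemma blk_proj (M : 'M[R]_(k * n)) (x : 'cV_(k * n)) b : blk M -> M *m x = 0 ->
  M *m (\col_i (if (i %/ n == b)%N then x i ord0 else 0)) = 0.
Proof.
move=> hM hx; apply/matrixP => i j; rewrite ord1 !mxE.
under eq_bigr do rewrite mxE.
case hb: (i %/ n == b)%N.
- transitivity ((M *m x) i ord0); last by rewrite hx mxE.
  rewrite mxE; apply: eq_bigr => l _; case: eqP => hl //.
  rewrite hM.1 ?mul0r //; move/eqP: hb => ->; apply/eqP => e; apply: hl; by rewrite e.
- apply: big1 => l _; case: eqP => hl; last by rewrite mulr0.
  by rewrite hM.1 ?mul0r // hl hb.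
Qed.

Lemma blk_shift (M : 'M[R]_(k * n)) (u : 'cV_(k * n)) s : blk M -> M *m u = 0 ->
  M *m (\col_i u (tau Hkn s i) ord0) = 0.
Proof.
move=> hM hu; apply/matrixP => i j; rewrite ord1 !mxE.
under eq_bigr do rewrite mxE -(hM.2 s).
transitivity ((M *m u) (tau Hkn s i) ord0); last by rewrite hu mxE.
by rewrite mxE [RHS](reindex_inj (@tau_inj _ _ Hkn s)).
Qed.
End Blk.

Lemma max_nat (P : nat -> Prop) (B : nat) : (forall r, P r -> (r <= B)%N) ->
  (exists r, P r) -> exists r, P r /\ forall r', P r' -> (r' <= r)%N.
Proof.
elim: B => [|B IH] hB [r0 Pr0].
  by exists r0; split => // r' /hB; rewrite leqn0 => /eqP ->.
case: (classic (P B.+1)) => hP.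
  by exists B.+1; split => // r' /hB.
apply: IH; last by exists r0.
move=> r Pr; have := hB r Pr; rewrite leq_eqVlt => /orP[/eqP e|//].
by move: Pr; rewrite e.
Qed.

Section Aux.
Variable R : realFieldType.
Local Open Scope ring_scope.

Lemma Aof_affine N m (A : 'I_m.+1 -> 'M[R]_N) x y t :
  Aof A (t *: x + (1 - t) *: y) = t *: Aof A x + (1 - t) *: Aof A y.
Proof.
rewrite /Aof.
under eq_bigr do rewrite !mxE scalerDl -!scalerA.
rewrite big_split /= -!scaler_sumr !scalerDr addrACA -scalerDl.
have -> : t + (1 - t) = 1 by rewrite addrCA subrr addr0.
by rewrite scale1r.
Qed.

Lemma Aof_sym N m (A : 'I_m.+1 -> 'M[R]_N) g :
  (forall i, sym_mx (A i)) -> (Aof A g)^T = Aof A g.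
Proof.
move=> hs; rewrite /Aof linearD /= hs linear_sum /=; congr (_ + _).
by apply: eq_bigr => i _; rewrite linearZ /= hs.
Qed.

Lemma psdZ N (P : 'M[R]_N) a : 0 <= a -> psd P -> psd (a *: P).
Proof.
move=> ha hP x; rewrite -scalemxAr -scalemxAl [X in _ <= X]mxE.
by apply: mulr_ge0 => //; exact: hP.
Qed.

Lemma psd_sub N (P Q : 'M[R]_N) : P^T = P -> Q^T = Q -> psd P -> psd Q ->
  (P <= (P + Q)%R)%MS.
Proof.
move=> hP hQ pP pQ; rewrite submxE; apply/eqP/matrixP => i j.
pose c := col j (cokermx (P + Q)).
have hc : (P + Q) *m c = 0 by rewrite /c colE mulmxA mulmx_coker mul0mx.
have h := psd_sum_ker hP hQ pP pQ hc.
transitivity ((P *m c) i ord0); last by rewrite h !mxE.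
rewrite /c [RHS]mxE [LHS]mxE; apply: eq_bigr => l _; by rewrite [in RHS]mxE.
Qed.
End Aux.

Theorem mainTheorem5 (R : realFieldType) (N mI mE : nat)
  (A : 'I_(mI + mE).+1 -> 'M[R]_N)
  (hN : (1 <= N)%N) (hm : (1 <= mI + mE)%N)
  (hsym : forall i, sym_mx (A i))
  (k : nat) (hk : is_qem A k)
  (F : 'rV[R]_(mI + mE) -> Prop) (hF : semidef_face mI A F) :
  dim_ge (VF A F) k.
Proof.
case: hk => [[kpos [n [e hcA]]] _].
case: hF => [[[g1 Fg1] [FG [Fconv _]]] Fnpd].
subst N.
have Hkn : (0 < k * n)%N by [].
have hblk : forall g, blk Hkn (Aof A g).
  move=> g; apply: blk_Aof => i; have [cA [_ ->]] := hcA i.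
  rewrite castmx_id; exact: blk_kron.
have hsymA : forall g, (Aof A g)^T = Aof A g by move=> g; exact: Aof_sym.
have hpsdA : forall g, F g -> psd (Aof A g) by move=> g /FG [].
have [r [[g0 [Fg0 er]] rmax]] : exists r,
   (exists g, F g /\ \rank (Aof A g) = r) /\
   forall r', (exists g, F g /\ \rank (Aof A g) = r') -> (r' <= r)%N.
  apply: (max_nat (B := k * n)).
    by move=> r' [g [_ <-]]; exact: rank_leq_row.
  by exists (\rank (Aof A g1)), g1.
subst r.
have hsub : forall g, F g -> (Aof A g <= Aof A g0)%MS.
  move=> g Fg.
  have h2a : 0 <= 2^-1 :> R by lra.
  have h2b : 2^-1 <= 1 :> R by lra.
  have Fh := Fconv g0 g 2^-1 Fg0 Fg h2a h2b.
  have h2n : 2^-1 != 0 :> R by rewrite invr_neq0 // pnatr_eq0.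
  have h2n' : 1 - 2^-1 != 0 :> R by apply/eqP; lra.
  have h2c : 0 <= 1 - 2^-1 :> R by lra.
  have s1 : forall g g', F g -> F g' ->
     (Aof A g <= (2^-1 *: Aof A g + (1 - 2^-1) *: Aof A g')%R)%MS.
    move=> a b Fa Fb.
    apply: (submx_trans (_ : (Aof A a <= 2^-1 *: Aof A a)%MS)).
      by rewrite (eqmx_scale _ h2n).
    by apply: psd_sub; rewrite ?linearZ /= ?hsymA //; apply: psdZ => //; apply: hpsdA.
  have s0 := s1 g0 g Fg0 Fg.
  have s2 : (Aof A g <= Aof A (2^-1 *: g0 + (1 - 2^-1) *: g))%MS.
    rewrite Aof_affine addrC.
    apply: (submx_trans (_ : (Aof A g <= (1 - 2^-1) *: Aof A g)%MS)).
      by rewrite (eqmx_scale _ h2n').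
    by apply: psd_sub; rewrite ?linearZ /= ?hsymA //; apply: psdZ => //; apply: hpsdA.
  rewrite -Aof_affine in s0.
  have := mxrank_leqif_sup s0.
  have hr := rmax _ (ex_intro _ _ (conj Fh erefl)).
  move=> /leqifP; case: ifP => [hh _|_ hlt]; last by move: (leq_ltn_trans hr hlt); rewrite ltnn.
  exact: submx_trans s2 hh.
have [x [xnz xq]] : exists x : 'cV[R]_(k * n), x != 0 /\
    ~ (0 < (x^T *m Aof A g0 *m x) ord0 ord0).
  apply: NNPP => H; apply: (Fnpd g0 Fg0) => x xnz; apply: NNPP => H'.
  by apply: H; exists x.
have hx0 : Aof A g0 *m x = 0.
  apply: psd_ker => //; last first.
    by have := hpsdA g0 Fg0 x; rewrite le_eqVlt => /orP[/eqP <- //|/xq].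
  exact: hpsdA.
case: (pickP (fun i => x i ord0 != 0)) => [i0 hi0 | hnone]; last first.
  exfalso; move/eqP: xnz; apply; apply/matrixP => i j; rewrite ord1 mxE.
  by move: (hnone i) => /negbFE/eqP.
pose b := (i0 %/ n)%N.
pose u : 'cV[R]_(k * n) := \col_i (if (i %/ n == b)%N then x i ord0 else 0).
pose B : 'M[R]_(k * n, k) := \matrix_(i, s) u (tau Hkn s i) ord0.
have hu : Aof A g0 *m u = 0 by apply: blk_proj => //.
have hcol : forall j : 'I_k, col j B = \col_i u (tau Hkn j i) ord0.
  by move=> j; apply/matrixP => i l; rewrite !mxE.
exists B; split; last first.
  move=> j g Fg; have /submxP [D ->] := hsub g Fg.
  by rewrite -mulmxA hcol blk_shift // mulmx0.
apply/eqP; rewrite eqn_leq rank_leq_col /=.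
have hb : (b < k)%N by exact: ord_div_lt.
have hC : rowsub (fun s : 'I_k => tau Hkn (k - s) i0) B = (x i0 ord0)%:M.
  apply/matrixP => s' s; rewrite !mxE.
  case: (eqVneq s' s) => [->|hne].
    by rewrite tau_back ?(ltnW (ltn_ord s)) // eqxx mulr1n.
  rewrite tau_comp tau_div -/b.
  have -> : ((b + (s + (k - s'))) %% k == b)%N = false.
    by apply/negbTE; apply: (@arith_ne _ _ Hkn) => //; rewrite eq_sym.
  by rewrite mulr0n.
have := mxrankM_maxr (rowsub (fun s : 'I_k => tau Hkn (k - s) i0) 1%:M) B.
rewrite -rowsubE hC mxrank_unit //.
by rewrite unitmxE det_scalar unitfE expf_neq0.
Qed.
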